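(* Let $\mathcal{X}$ be the set of order types of linear orders that embed into $U$. Then $\mathcal{X}$ is closed under $\cdot_\omega$ and $\cdot_\omega$ is associative on $\mathcal{X}$; i.e. $\langle\mathcal{X},\cdot_\omega\rangle$ is a semigroup.
   Context: The countable condensation $\sim_\omega$ on a linear order $L$: $x\sim_\omega y$ iff the closed interval between $x$ and $y$ is countable; $L/\!\sim_\omega$ is the linear order of its classes. $ML$ denotes the lexicographic product (each element of $M$ replaced by a copy of $L$). $M\cdot_\omega L$ is the order type of $ML/\!\sim_\omega$. $U$ is the linear order $R^*+\mathbb{Q}+R$, where $R$ is obtained from $\omega_1$ by replacing each $\alpha<\omega_1$ with a point $u_\alpha$ followed by a copy of the rationals, $R^*$ is the reverse of $R$, and the middle summand is a copy of the rationals. *)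

(* Defs.v *)
From mathcomp Require Import all_boot all_order all_algebra.
Import Order.TTheory GRing.Theory Num.Theory.

Definition linear {T : Type} (r : T -> T -> Prop) : Prop :=
  (forall x, ~ r x x) /\
  (forall x y z, r x y -> r y z -> r x z) /\
  (forall x y, r x y \/ x = y \/ r y x).

Definition le_of {T : Type} (r : T -> T -> Prop) (x y : T) : Prop := r x y \/ x = y.

Definition countable_set {T : Type} (P : T -> Prop) : Prop :=
  exists f : T -> nat, forall a b, P a -> P b -> f a = f b -> a = b.

Definition closed_between {T : Type} (r : T -> T -> Prop) (x y : T) : T -> Prop :=
  fun z => (le_of r x z /\ le_of r z y) \/ (le_of r y z /\ le_of r z x).

Definition csim {T : Type} (r : T -> T -> Prop) (x y : T) : Prop :=
  countable_set (closed_between r x y).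

(** Carrier of L / ~_omega: the equivalence classes (as predicates). *)
Definition cond_car {T : Type} (r : T -> T -> Prop) : Type :=
  { C : T -> Prop | exists x, C = csim r x }.

Definition cond_lt {T : Type} (r : T -> T -> Prop) (C D : cond_car r) : Prop :=
  exists x y, proj1_sig C x /\ proj1_sig D y /\ r x y /\ ~ csim r x y.

(** Lexicographic product ML: each point of M replaced by a copy of L. *)
Definition lex_lt {M L : Type} (rM : M -> M -> Prop) (rL : L -> L -> Prop)
  (p q : M * L) : Prop :=
  rM p.1 q.1 \/ (p.1 = q.1 /\ rL p.2 q.2).

Definition sum_lt {A B : Type} (rA : A -> A -> Prop) (rB : B -> B -> Prop)
  (p q : A + B) : Prop :=
  match p, q with
  | inl a, inl a' => rA a a'
  | inr b, inr b' => rB b b'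
  | inl _, inr _ => True
  | inr _, inl _ => False
  end.

Definition rev_lt {T : Type} (r : T -> T -> Prop) (x y : T) : Prop := r y x.

Definition embeds {S T : Type} (rS : S -> S -> Prop) (rT : T -> T -> Prop) : Prop :=
  exists f : S -> T, forall x y, rS x y <-> rT (f x) (f y).

Definition order_iso {S T : Type} (rS : S -> S -> Prop) (rT : T -> T -> Prop) : Prop :=
  exists f : S -> T, (forall y, exists x, f x = y) /\
                     (forall x y, rS x y <-> rT (f x) (f y)).

(** (W, wlt) is (a copy of) omega_1: an uncountable well-order all of whose
    proper initial segments are countable. *)
Definition is_omega1 (W : Type) (wlt : W -> W -> Prop) : Prop :=
  linear wlt /\ well_founded wlt /\
  ~ countable_set (fun _ : W => True) /\
  (forall w, countable_set (fun v => wlt v w)).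

Definition rat_lt (a b : rat) : Prop := (a < b)%R.

(** 1 + Q: a point u (None) followed by a copy of the rationals. *)
Definition pointQ_lt (p q : option rat) : Prop :=
  match p, q with
  | None, Some _ => True
  | Some a, Some b => rat_lt a b
  | _, _ => False
  end.

(** R: omega_1 with each alpha replaced by u_alpha followed by a copy of Q. *)
Definition R_car (W : Type) : Type := (W * option rat)%type.
Definition R_lt {W : Type} (wlt : W -> W -> Prop) : R_car W -> R_car W -> Prop :=
  lex_lt wlt pointQ_lt.

(** U = R^* + Q + R. *)
Definition U_car (W : Type) : Type := (R_car W + (rat + R_car W))%type.
Definition U_lt {W : Type} (wlt : W -> W -> Prop) : U_car W -> U_car W -> Prop :=
  sum_lt (rev_lt (R_lt wlt)) (sum_lt rat_lt (R_lt wlt)).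

(** M ._omega L is the order type of ML / ~_omega. *)
Definition comega_lt {M L : Type} (rM : M -> M -> Prop) (rL : L -> L -> Prop) :=
  cond_lt (lex_lt rM rL).

(* Main.v *)
From Pilot Require Import Defs.
From mathcomp Require Import all_boot all_order all_algebra.
From Stdlib Require Import Classical ClassicalEpsilon ProofIrrelevance FunctionalExtensionality PropExtensionality.
Import Order.TTheory GRing.Theory Num.Theory.
Import Pilot.Defs.

Definition cntT (X : Type) : Prop := countable_set (fun _ : X => True).

Lemma cnt_into {T : Type} (X : countType) (e : T -> X) (P : T -> Prop) :
  (forall a b, P a -> P b -> e a = e b -> a = b) -> countable_set P.
Proof.
move=> H; exists (fun t => pickle (e t)) => a b Pa Pb E; apply: H => //.
exact: (pcan_inj pickleK E).
Qed.

Lemma cnt_image {X Y : Type} (g : X -> Y) {P : X -> Prop} {Q : Y -> Prop} :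
  countable_set Q -> (forall x, P x -> Q (g x)) ->
  (forall a b, P a -> P b -> g a = g b -> a = b) -> countable_set P.
Proof.
move=> [f Hf] HPQ Hinj; exists (fun x => f (g x)) => a b Pa Pb E.
apply: Hinj => //; apply: Hf => //; exact: HPQ.
Qed.

Lemma cnt_sub {X : Type} {P Q : X -> Prop} :
  countable_set Q -> (forall x, P x -> Q x) -> countable_set P.
Proof. move=> [f Hf] H; exists f => a b Pa Pb E; apply: Hf => //; exact: H. Qed.

Lemma cnt_union {X : Type} {P Q : X -> Prop} : countable_set P -> countable_set Q ->
  countable_set (fun x => P x \/ Q x).
Proof.
move=> [f Hf] [g Hg].
apply: (cnt_into _
  (fun x => if excluded_middle_informative (P x) then inl (f x) else inr (g x))).
move=> a b Ha Hb.
destruct (excluded_middle_informative (P a)) as [Pa|Pa];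
destruct (excluded_middle_informative (P b)) as [Pb|Pb] => E; try discriminate.
- injection E => E'; exact: Hf.
- injection E => E'; apply: Hg => //; [case: Ha|case: Hb] => //.
Qed.

Lemma cnt_prod {A B : Type} {P : A -> Prop} {Q : B -> Prop} :
  countable_set P -> countable_set Q ->
  countable_set (fun x : A * B => P x.1 /\ Q x.2).
Proof.
move=> [f Hf] [g Hg].
apply: (cnt_into _ (fun x => (f x.1, g x.2))).
move=> [a1 a2] [b1 b2] /= [Pa Qa] [Pb Qb] [E1 E2].
by rewrite (Hf _ _ Pa Pb E1) (Hg _ _ Qa Qb E2).
Qed.

Lemma cnt_sum {A B : Type} {P : A -> Prop} {Q : B -> Prop} :
  countable_set P -> countable_set Q ->
  countable_set (fun s : A + B => match s with inl a => P a | inr b => Q b end).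
Proof.
move=> [f Hf] [g Hg].
apply: (cnt_into _
  (fun s => match s with inl a => inl (f a) | inr b => inr (g b) end)).
move=> [a|a] [b|b] /= Ha Hb E; try discriminate.
- injection E => E'; by rewrite (Hf _ _ Ha Hb E').
- injection E => E'; by rewrite (Hg _ _ Ha Hb E').
Qed.

Lemma cnt_countType (X : countType) (P : X -> Prop) : countable_set P.
Proof. apply: (@cnt_into X X id); by move=> a b. Qed.

Lemma cnt_sing {X : Type} (a : X) : countable_set (fun z => z = a).
Proof. exists (fun _ => 0) => x y -> ->; done. Qed.

Lemma inhab_of_unc {X : Type} : ~ cntT X -> exists x : X, True.
Proof.
move=> H; apply: NNPP => Hn; apply: H; exists (fun _ => 0) => a.
exfalso; apply: Hn; by exists a.
Qed.

Lemma le_trans' {T : Type} {r : T -> T -> Prop} : linear r ->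
  forall {x y z}, le_of r x y -> le_of r y z -> le_of r x z.
Proof.
move=> [_ [Htr _]] x y z [Hxy|Exy] [Hyz|Eyz].
- left; exact: Htr Hxy Hyz.
- by left; rewrite -Eyz.
- by left; rewrite Exy.
- by right; rewrite Exy.
Qed.

Lemma le_total {T : Type} {r : T -> T -> Prop} : linear r ->
  forall x y, le_of r x y \/ le_of r y x.
Proof.
move=> [_ [_ Ht]] x y; case: (Ht x y) => [H|[E|H]].
- by left; left.
- by left; right.
- by right; left.
Qed.

Lemma le_lt_false {T : Type} {r : T -> T -> Prop} : linear r ->
  forall x y, le_of r x y -> r y x -> False.
Proof.
move=> [Hirr [Htr _]] x y [H|E] H'.
- exact: Hirr (Htr _ _ _ H H').
- by rewrite E in H'; exact: Hirr H'.
Qed.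

Lemma le_antisym {T : Type} {r : T -> T -> Prop} : linear r ->
  forall x y, le_of r x y -> le_of r y x -> x = y.
Proof.
move=> Hl x y H [H'|E] //.
exfalso; exact: le_lt_false Hl _ _ H H'.
Qed.

Lemma CB_sub {T : Type} {r : T -> T -> Prop} : linear r -> forall x y z w,
  closed_between r x z w -> closed_between r x y w \/ closed_between r y z w.
Proof.
move=> Hl x y z w [[H1 H2]|[H1 H2]]; case: (le_total Hl w y) => H3.
- by left; left.
- by right; left.
- by right; right.
- by left; right.
Qed.

Lemma CB_sym {T : Type} {r : T -> T -> Prop} {x y w : T} :
  closed_between r x y w -> closed_between r y x w.
Proof. by move=> [H|H]; [right|left]. Qed.

Lemma csim_refl {T : Type} {r : T -> T -> Prop} : linear r -> forall x, csim r x x.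
Proof.
move=> Hl x; apply: (cnt_sub (cnt_sing x)) => z [[H1 H2]|[H1 H2]];
  exact: (le_antisym Hl).
Qed.

Lemma csim_sym {T : Type} {r : T -> T -> Prop} {x y : T} : csim r x y -> csim r y x.
Proof. move=> H; apply: (cnt_sub H) => z; exact: CB_sym. Qed.

Lemma csim_trans {T : Type} {r : T -> T -> Prop} : linear r -> forall {x y z},
  csim r x y -> csim r y z -> csim r x z.
Proof.
move=> Hl x y z H1 H2; apply: (cnt_sub (cnt_union H1 H2)) => w; exact: CB_sub.
Qed.

Lemma csim_shift {T : Type} {r : T -> T -> Prop} : linear r -> forall {a b a' b'},
  r a b -> ~ csim r a b -> csim r a a' -> csim r b b' -> r a' b'.
Proof.
move=> Hl a b a' b' Hab Hn Ha Hb.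
case: (proj2 (proj2 Hl) a' b') => [//|H]; exfalso; apply: Hn.
have Hba : le_of r b' a' by case: H => [->|H]; [right|left].
apply: (cnt_sub (cnt_union Ha (csim_sym Hb))) => w [[H1 H2]|[H1 H2]].
- case: (le_total Hl w a') => H3.
  + by left; left.
  + right; left; split => //; exact: (le_trans' Hl Hba H3).
- exfalso; exact: le_lt_false Hl _ _ (le_trans' Hl H1 H2) Hab.
Qed.

Lemma csim_conv {T : Type} {r : T -> T -> Prop} : linear r -> forall {c d e},
  csim r c e -> le_of r c d -> le_of r d e -> csim r c d.
Proof.
move=> Hl c d e H Hcd Hde; apply: (cnt_sub H) => w [[H1 H2]|[H1 H2]].
- left; split => //; exact: (le_trans' Hl H2 Hde).
- left; split; first exact: (le_trans' Hl Hcd H1).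
  exact: (le_trans' Hl H2 (le_trans' Hl Hcd Hde)).
Qed.

Definition rep {T : Type} {r : T -> T -> Prop} (C : cond_car r) : T :=
  proj1_sig (constructive_indefinite_description _ (proj2_sig C)).

Lemma rep_spec {T : Type} {r : T -> T -> Prop} (C : cond_car r) :
  proj1_sig C = csim r (rep C).
Proof. exact: (proj2_sig (constructive_indefinite_description _ (proj2_sig C))). Qed.

Definition cls {T : Type} (r : T -> T -> Prop) (t : T) : cond_car r :=
  exist _ (csim r t) (ex_intro _ t erefl).

Lemma in_rep {T : Type} {r : T -> T -> Prop} : linear r -> forall C : cond_car r,
  proj1_sig C (rep C).
Proof. move=> Hl C; rewrite rep_spec; exact: csim_refl. Qed.

Lemma in_cls {T : Type} {r : T -> T -> Prop} : linear r -> forall t,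
  proj1_sig (cls r t) t.
Proof. move=> Hl t; exact: csim_refl. Qed.

Lemma in_csim {T : Type} {r : T -> T -> Prop} : linear r -> forall {C : cond_car r} {x y},
  proj1_sig C x -> proj1_sig C y -> csim r x y.
Proof.
move=> Hl C x y; rewrite rep_spec => Hx Hy.
exact: (csim_trans Hl (csim_sym Hx) Hy).
Qed.

Lemma cond_eq {T : Type} {r : T -> T -> Prop} : linear r -> forall {C D : cond_car r} {x y},
  proj1_sig C x -> proj1_sig D y -> csim r x y -> C = D.
Proof.
move=> Hl C D x y HC HD Hxy.
case: C HC => P HP /= HC. case: D HD => Q HQ /= HD.
have E : P = Q.
{ case: HP HC => a Ea HC; case: HQ HD => b Eb HD. subst P Q.
  have Hab : csim r a b by exact: (csim_trans Hl HC (csim_trans Hl Hxy (csim_sym HD))).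
  apply: functional_extensionality => z; apply: propositional_extensionality; split.
  - move=> H; exact: (csim_trans Hl (csim_sym Hab) H).
  - move=> H; exact: (csim_trans Hl Hab H). }
subst Q. by rewrite (proof_irrelevance _ HP HQ).
Qed.

Lemma cond_lt_char {T : Type} {r : T -> T -> Prop} : linear r ->
  forall {C D : cond_car r} {a b}, proj1_sig C a -> proj1_sig D b ->
  (cond_lt r C D <-> r a b /\ ~ csim r a b).
Proof.
move=> Hl C D a b Ha Hb; split.
- move=> [x [y [Hx [Hy [Hxy Hn]]]]].
  have Hxa := in_csim Hl Hx Ha. have Hyb := in_csim Hl Hy Hb.
  split; first exact: (csim_shift Hl Hxy Hn Hxa Hyb).
  move=> Hab; apply: Hn.
  exact: (csim_trans Hl Hxa (csim_trans Hl Hab (csim_sym Hyb))).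
- move=> [Hab Hn]; exists a, b; by repeat split.
Qed.

Lemma cond_linear {T : Type} {r : T -> T -> Prop} : linear r -> linear (cond_lt r).
Proof.
move=> Hl; split; [|split].
- move=> C /(cond_lt_char Hl (in_rep Hl C) (in_rep Hl C)) [_ H]; apply: H; exact: csim_refl.
- move=> C D E /(cond_lt_char Hl (in_rep Hl C) (in_rep Hl D)) [H1 N1]
    /(cond_lt_char Hl (in_rep Hl D) (in_rep Hl E)) [H2 N2].
  apply/(cond_lt_char Hl (in_rep Hl C) (in_rep Hl E)); split.
  + exact: (proj1 (proj2 Hl)) H1 H2.
  + move=> H; apply: N1; apply: (csim_conv Hl H); by left.
- move=> C D.
  case: (classic (csim r (rep C) (rep D))) => Hc.
  + right; left; exact: (cond_eq Hl (in_rep Hl C) (in_rep Hl D) Hc).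
  + case: (proj2 (proj2 Hl) (rep C) (rep D)) => [H|[E|H]].
    * left; apply/(cond_lt_char Hl (in_rep Hl C) (in_rep Hl D)); by split.
    * exfalso; apply: Hc; rewrite E; exact: csim_refl.
    * right; right; apply/(cond_lt_char Hl (in_rep Hl D) (in_rep Hl C)); split => //.
      move=> H'; apply: Hc; exact: csim_sym.
Qed.

Lemma embed_crit {T S : Type} (r : T -> T -> Prop) (rS : S -> S -> Prop) (g : T -> S) :
  linear r -> (forall x y, r x y /\ ~ csim r x y <-> rS (g x) (g y)) ->
  embeds (cond_lt r) rS.
Proof.
move=> Hl Hg; exists (fun C => g (rep C)) => C D.
exact: iff_trans (cond_lt_char Hl (in_rep Hl C) (in_rep Hl D)) (Hg _ _).
Qed.

Lemma iso_crit {T1 T2 : Type} (r1 : T1 -> T1 -> Prop) (r2 : T2 -> T2 -> Prop) (h : T1 -> T2) :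
  linear r1 -> linear r2 ->
  (forall t2, exists t1, csim r2 (h t1) t2) ->
  (forall x y, r1 x y /\ ~ csim r1 x y <-> r2 (h x) (h y) /\ ~ csim r2 (h x) (h y)) ->
  order_iso (cond_lt r1) (cond_lt r2).
Proof.
move=> Hl1 Hl2 Hs Hh.
have Hc : forall a b, csim r1 a b -> csim r2 (h a) (h b).
{ move=> a b Hab; apply: NNPP => Hn.
  case: (proj2 (proj2 Hl2) (h a) (h b)) => [H|[E|H]].
  - by case: (proj2 (Hh a b) (conj H Hn)).
  - by apply: Hn; rewrite E; apply: csim_refl.
  - have Hn' : ~ csim r2 (h b) (h a) by move=> H'; apply: Hn; apply: csim_sym.
    case: (proj2 (Hh b a) (conj H Hn')) => _ []; exact: csim_sym. }
exists (fun C => cls r2 (h (rep C))); split.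
- move=> D; case: (Hs (rep D)) => t1 Ht1; exists (cls r1 t1).
  apply: (cond_eq Hl2 (in_cls Hl2 _) (in_rep Hl2 D)).
  apply: (csim_trans Hl2 _ Ht1); apply: Hc.
  exact: (in_csim Hl1 (in_rep Hl1 (cls r1 t1)) (in_cls Hl1 t1)).
- move=> C D.
  apply: iff_trans (cond_lt_char Hl1 (in_rep Hl1 C) (in_rep Hl1 D)) _.
  apply: iff_trans (Hh _ _) _.
  apply: iff_sym; exact: (cond_lt_char Hl2 (in_cls Hl2 _) (in_cls Hl2 _)).
Qed.

Lemma quot_all_eq {T : Type} {r : T -> T -> Prop} : linear r ->
  (forall x y, csim r x y) -> forall C D : cond_car r, C = D.
Proof. move=> Hl H C D; exact: (cond_eq Hl (in_rep Hl C) (in_rep Hl D) (H _ _)). Qed.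

Lemma quot_all_cnt {T : Type} {r : T -> T -> Prop} : linear r ->
  (forall x y, csim r x y) -> cntT (cond_car r).
Proof. move=> Hl H; exists (fun _ => 0) => a b _ _ _; exact: quot_all_eq. Qed.

Definition LC {T : Type} (r : T -> T -> Prop) := forall x y, csim r x y.

Lemma lex_linear {M L : Type} {rM : M -> M -> Prop} {rL : L -> L -> Prop} :
  linear rM -> linear rL -> linear (lex_lt rM rL).
Proof.
move=> [iM [tM cM]] [iL [tL cL]]; split; [|split].
- by move=> [m l] [H|[_ H]]; [exact: iM H| exact: iL H].
- move=> [m1 l1] [m2 l2] [m3 l3]; rewrite /lex_lt /=.
  move=> [H1|[E1 H1]] [H2|[E2 H2]].
  + left; exact: tM H1 H2.
  + by left; rewrite -E2.
  + by left; rewrite E1.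
  + right; split; [by rewrite E1|exact: tL H1 H2].
- move=> [m1 l1] [m2 l2]; rewrite /lex_lt /=.
  case: (cM m1 m2) => [H|[E|H]].
  + by left; left.
  + case: (cL l1 l2) => [H'|[E'|H']].
    * by left; right.
    * by right; left; rewrite E E'.
    * by right; right; right.
  + by right; right; left.
Qed.

Lemma lex_le_fst {M L : Type} {rM : M -> M -> Prop} {rL : L -> L -> Prop} {p q} :
  le_of (lex_lt rM rL) p q -> le_of rM p.1 q.1.
Proof. by move=> [[H|[E _]]|E]; [left|right|right; rewrite E]. Qed.

Lemma lex_le_snd {M L : Type} {rM : M -> M -> Prop} {rL : L -> L -> Prop} {m a b} :
  le_of rL a b -> le_of (lex_lt rM rL) (m, a) (m, b).
Proof. by move=> [H|E]; [left; right|right; rewrite E]. Qed.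

Lemma lex_le_same {M L : Type} {rM : M -> M -> Prop} {rL : L -> L -> Prop} :
  linear rM -> forall {m a b},
  le_of (lex_lt rM rL) (m, a) (m, b) -> le_of rL a b.
Proof.
move=> Hl m a b [[H|[_ H]]|E].
- by case: (proj1 Hl m).
- by left.
- by right; case: E.
Qed.

Lemma csim_lex {M L : Type} {rM : M -> M -> Prop} {rL : L -> L -> Prop} :
  linear rM -> linear rL -> LC rM -> LC rL ->
  forall p q, csim (lex_lt rM rL) p q <-> p.1 = q.1 \/ cntT L.
Proof.
move=> HlM HlL HM HL.
have aux : forall m1 l1 m2 l2, rM m1 m2 -> csim (lex_lt rM rL) (m1, l1) (m2, l2) -> cntT L.
{ move=> m1 l1 m2 l2 Hm Hc.
  have A1 : countable_set (fun l => closed_between (lex_lt rM rL) (m1, l1) (m2, l2) (m1, l)).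
  { apply: (cnt_image (fun l => (m1, l)) Hc) => // a b _ _ E; by case: E. }
  have A2 : countable_set (fun l => closed_between (lex_lt rM rL) (m1, l1) (m2, l2) (m2, l)).
  { apply: (cnt_image (fun l => (m2, l)) Hc) => // a b _ _ E; by case: E. }
  apply: (cnt_sub (cnt_union A1 (cnt_union A2 (HL l2 l1)))) => l _.
  case: (le_total HlL l1 l) => H1.
  - left; left; split; first exact: lex_le_snd.
    by left; left.
  - case: (le_total HlL l l2) => H2.
    + right; left; left; split; first by left; left.
      exact: lex_le_snd.
    + right; right; left; by split. }
move=> [m1 l1] [m2 l2] /=; split.
- move=> Hc; case: (classic (m1 = m2)) => E; first by left.
  right; case: (proj2 (proj2 HlM) m1 m2) => [H|[//|H]].
  + exact: aux H Hc.
  + exact: aux H (csim_sym Hc).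
- move=> [E|HcL].
  + subst m2.
    have Hfst : forall z, closed_between (lex_lt rM rL) (m1, l1) (m1, l2) z -> z.1 = m1.
    { move=> [zm zl] H /=.
      have Hz : closed_between rM m1 m1 zm.
      { case: H => [[H1 H2]|[H1 H2]]; [left|right];
          split; [exact: (lex_le_fst H1)|exact: (lex_le_fst H2)|exact: (lex_le_fst H1)|exact: (lex_le_fst H2)]. }
      by case: Hz => [[H1 H2]|[H1 H2]]; apply: (le_antisym HlM). }
    apply: (cnt_image snd (HL l1 l2)).
    * move=> [zm zl] H.
      have /= Ez := Hfst _ H. subst zm.
      case: H => [[H1 H2]|[H1 H2]]; [left|right]; split;
        [exact: (lex_le_same HlM H1)|exact: (lex_le_same HlM H2)|exact: (lex_le_same HlM H1)|exact: (lex_le_same HlM H2)].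
    * move=> [a1 a2] [b1 b2] Ha Hb /= E.
      have /= Ea := Hfst _ Ha. have /= Eb := Hfst _ Hb.
      by rewrite Ea Eb E.
  + apply: (cnt_sub (cnt_prod (HM m1 m2) HcL)) => z H; split => //.
    case: H => [[H1 H2]|[H1 H2]]; [left|right]; split;
      [exact: (lex_le_fst H1)|exact: (lex_le_fst H2)|exact: (lex_le_fst H1)|exact: (lex_le_fst H2)].
Qed.

Lemma cond_LC {M L : Type} {rM : M -> M -> Prop} {rL : L -> L -> Prop} :
  linear rM -> linear rL -> LC rM -> LC rL -> LC (cond_lt (lex_lt rM rL)).
Proof.
move=> HlM HlL HM HL.
have Hl := lex_linear HlM HlL.
have Hcs := csim_lex HlM HlL HM HL.
move=> C D.
case: (classic (cntT L)) => HcL.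
- have Hall : forall E F : cond_car (lex_lt rM rL), E = F.
  { apply: (quot_all_eq Hl) => x y; apply/Hcs; by right. }
  exists (fun _ => 0) => a b _ _ _; exact: Hall.
- apply: (cnt_image (fun E : cond_car (lex_lt rM rL) => (rep E).1) (HM (rep C).1 (rep D).1)).
  + have Hle : forall E F : cond_car (lex_lt rM rL),
        le_of (cond_lt (lex_lt rM rL)) E F -> le_of rM (rep E).1 (rep F).1.
    { move=> E F [H|->]; last by right.
      move/(cond_lt_char Hl (in_rep Hl E) (in_rep Hl F)): H => [H _].
      exact: (lex_le_fst (or_introl H)). }
    move=> E [[H1 H2]|[H1 H2]]; [left|right]; split; apply: Hle => //.
  + move=> E F _ _ Eq. apply: (cond_eq Hl (in_rep Hl E) (in_rep Hl F)).
    apply/Hcs; by left.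
Qed.

Lemma uncount_B {L K : Type} {rL : L -> L -> Prop} {rK : K -> K -> Prop} :
  linear rL -> linear rK -> LC rL -> LC rK -> ~ cntT K ->
  (cntT (cond_car (lex_lt rL rK)) <-> cntT L).
Proof.
move=> HlL HlK HL HK HnK.
have Hl := lex_linear HlL HlK.
have Hcs := csim_lex HlL HlK HL HK.
split.
- case: (inhab_of_unc HnK) => k0 _ Hc.
  apply: (cnt_image (fun l => cls (lex_lt rL rK) (l, k0)) Hc) => // a b _ _ E.
  have H : csim (lex_lt rL rK) (a, k0) (b, k0).
  { have := in_cls Hl (b, k0); rewrite -E => H'; exact H'. }
  case: (proj1 (Hcs _ _) H) => [/= -> //|HK']; by case: HnK.
- move=> Hc.
  apply: (cnt_image (fun E : cond_car (lex_lt rL rK) => (rep E).1) Hc) => // E F _ _ Eq.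
  apply: (cond_eq Hl (in_rep Hl E) (in_rep Hl F)); apply/Hcs; by left.
Qed.

Definition wle {W : Type} (wlt : W -> W -> Prop) (v w : W) : Prop := wlt v w \/ v = w.

Lemma wle_trans {W : Type} {wlt : W -> W -> Prop} :
  (forall x y z, wlt x y -> wlt y z -> wlt x z) ->
  forall {a b c}, wle wlt a b -> wle wlt b c -> wle wlt a c.
Proof.
move=> Htr a b c [H|E] [H'|E'].
- left; exact: Htr H H'.
- by left; rewrite -E'.
- by left; rewrite E.
- by right; rewrite E.
Qed.

Definition Sw {W : Type} (wlt : W -> W -> Prop) (w : W) (u : U_car W) : Prop :=
  match u with
  | inl p => wle wlt p.1 w
  | inr (inl _) => True
  | inr (inr p) => wle wlt p.1 w
  end.

Lemma Sw_cnt {W : Type} {wlt : W -> W -> Prop} :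
  (forall w, countable_set (fun v => wlt v w)) -> forall w, countable_set (Sw wlt w).
Proof.
move=> Hinit w.
have Hseg : countable_set (fun v => wle wlt v w) := cnt_union (Hinit w) (cnt_sing w).
have H1 : countable_set (fun p : W * option rat => wle wlt p.1 w /\ (fun _ : option rat => True) p.2)
  := cnt_prod Hseg (cnt_countType _ (fun _ : option rat => True)).
have H2 : countable_set (fun _ : rat => True) := cnt_countType _ (fun _ : rat => True).
apply: (cnt_sub (cnt_sum H1 (cnt_sum H2 H1))) => [[p|[q|p]]] /= H; by split.
Qed.

Lemma Sw_mono {W : Type} {wlt : W -> W -> Prop} :
  (forall x y z, wlt x y -> wlt y z -> wlt x z) ->
  forall {w w' u}, wle wlt w w' -> Sw wlt w u -> Sw wlt w' u.
Proof.
move=> Htr w w' u H; case: u => [p|[q|p]] /= Hp //; exact: (wle_trans Htr Hp H).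
Qed.

Lemma Sw_conv {W : Type} {wlt : W -> W -> Prop} :
  (forall x y z, wlt x y -> wlt y z -> wlt x z) ->
  forall {w x y z}, Sw wlt w x -> Sw wlt w y ->
  le_of (U_lt wlt) x z -> le_of (U_lt wlt) z y -> Sw wlt w z.
Proof.
move=> Htr w x y z Hx Hy Hxz Hzy.
case: z Hxz Hzy => [[v o]|[q|[v o]]] Hxz Hzy.
- case: Hxz => [H|E]; last by subst x.
  case: x Hx H => [[v' o']|[q'|[v' o']]] Hx H;
    rewrite /U_lt /sum_lt /rev_lt /R_lt /lex_lt /= in H; try done.
  simpl in Hx |- *.
  case: H => [H|[E _]].
  + exact: (wle_trans Htr (or_introl H) Hx).
  + simpl in E; by rewrite E.
- done.
- case: Hzy => [H|E]; last by subst y.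
  case: y Hy H => [[v' o']|[q'|[v' o']]] Hy H;
    rewrite /U_lt /sum_lt /rev_lt /R_lt /lex_lt /= in H; try done.
  simpl in Hy |- *.
  case: H => [H|[E _]].
  + exact: (wle_trans Htr (or_introl H) Hy).
  + simpl in E; by rewrite E.
Qed.

Lemma U_LC {W : Type} {wlt : W -> W -> Prop} : is_omega1 W wlt -> LC (U_lt wlt).
Proof.
move=> [Hl [_ [Hunc Hinit]]].
have Htr := proj1 (proj2 Hl).
case: (inhab_of_unc Hunc) => w0 _.
have Hex : forall u, exists w, Sw wlt w u.
{ move=> [[v o]|[q|[v o]]]; [exists v; by right|by exists w0|exists v; by right]. }
move=> x y.
case: (Hex x) => wx Hx; case: (Hex y) => wy Hy.
have [w [Hx' Hy']] : exists w, Sw wlt w x /\ Sw wlt w y.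
{ case: (proj2 (proj2 Hl) wx wy) => [H|[E|H]].
  - exists wy; split => //; exact: (Sw_mono Htr (or_introl H) Hx).
  - exists wy; split => //; by rewrite -E.
  - exists wx; split => //; exact: (Sw_mono Htr (or_introl H) Hy). }
apply: (cnt_sub (Sw_cnt Hinit w)) => z [[H1 H2]|[H1 H2]].
- exact: (Sw_conv Htr Hx' Hy' H1 H2).
- exact: (Sw_conv Htr Hy' Hx' H1 H2).
Qed.

Lemma U_irr {W : Type} {wlt : W -> W -> Prop} : (forall x, ~ wlt x x) ->
  forall u, ~ U_lt wlt u u.
Proof.
move=> Hirr [[v o]|[q|[v o]]]; rewrite /U_lt /sum_lt /rev_lt /R_lt /lex_lt /=.
- move=> [H|[_ H]]; first exact: Hirr H.
  case: o H => [a|] /= H //; by rewrite /rat_lt ltxx in H.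
- by rewrite /rat_lt ltxx.
- move=> [H|[_ H]]; first exact: Hirr H.
  case: o H => [a|] /= H //; by rewrite /rat_lt ltxx in H.
Qed.

Lemma LC_embed {S T : Type} {rS : S -> S -> Prop} {rT : T -> T -> Prop} :
  linear rS -> (forall x, ~ rT x x) -> LC rT -> embeds rS rT -> LC rS.
Proof.
move=> Hl Hirr HLC [f Hf] x y.
have Hinj : forall a b, f a = f b -> a = b.
{ move=> a b E; case: (proj2 (proj2 Hl) a b) => [H|[//|H]]; exfalso.
  - move: (proj1 (Hf a b) H); rewrite E; apply: Hirr.
  - move: (proj1 (Hf b a) H); rewrite E; apply: Hirr. }
have Hle : forall a b, le_of rS a b -> le_of rT (f a) (f b).
{ move=> a b [H|->]; [left; exact: (proj1 (Hf a b) H)|by right]. }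
apply: (cnt_image f (HLC (f x) (f y))).
- move=> z [[H1 H2]|[H1 H2]]; [left|right]; split; exact: Hle.
- move=> a b _ _; exact: Hinj.
Qed.

Theorem theorem5p4 :
  forall (W : Type) (wlt : W -> W -> Prop), is_omega1 W wlt ->
  (forall (M : Type) (rM : M -> M -> Prop) (L : Type) (rL : L -> L -> Prop),
     linear rM -> linear rL -> embeds rM (U_lt wlt) -> embeds rL (U_lt wlt) ->
     embeds (comega_lt rM rL) (U_lt wlt)) /\
  (forall (M : Type) (rM : M -> M -> Prop) (L : Type) (rL : L -> L -> Prop)
          (K : Type) (rK : K -> K -> Prop),
     linear rM -> linear rL -> linear rK ->
     embeds rM (U_lt wlt) -> embeds rL (U_lt wlt) -> embeds rK (U_lt wlt) ->
     order_iso (comega_lt (comega_lt rM rL) rK) (comega_lt rM (comega_lt rL rK))).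
Proof.
move=> W wlt Hom.
have HU := U_LC Hom.
have HUirr : forall u, ~ U_lt wlt u u by apply: U_irr; exact: (proj1 (proj1 Hom)).
have LCe : forall (X : Type) (rX : X -> X -> Prop), linear rX -> embeds rX (U_lt wlt) -> LC rX.
{ move=> X rX Hl He; exact: (LC_embed Hl HUirr HU He). }
split.
- move=> M rM L rL HlM HlL HeM HeL.
  have HM := LCe _ _ HlM HeM. have HL := LCe _ _ HlL HeL.
  have Hl := lex_linear HlM HlL.
  have Hcs := csim_lex HlM HlL HM HL.
  rewrite /comega_lt.
  case: (classic (cntT L)) => HcL.
  + apply: (embed_crit _ _ (fun _ => (inr (inl 0%R) : U_car W)) Hl) => x y; split.
    * move=> [_ Hn]; exfalso; apply: Hn; apply/Hcs; by right.
    * move=> H; exfalso; exact: HUirr H.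
  + case: HeM => f Hf.
    apply: (embed_crit _ _ (fun p : M * L => f p.1) Hl) => [[m l] [m' l']] /=.
    apply: iff_trans (Hf m m'); split.
    * move=> [[H|[E _]] Hn] //. exfalso; apply: Hn; apply/Hcs; by left.
    * move=> H; split; first by left.
      move/Hcs => /= [E|/HcL []]. subst m'; exact: (proj1 HlM) m H.
- move=> M rM L rL K rK HlM HlL HlK HeM HeL HeK.
  have HM := LCe _ _ HlM HeM. have HL := LCe _ _ HlL HeL. have HK := LCe _ _ HlK HeK.
  have HlML := lex_linear HlM HlL. have HlLK := lex_linear HlL HlK.
  have HlA : linear (cond_lt (lex_lt rM rL)) := cond_linear HlML.
  have HlB : linear (cond_lt (lex_lt rL rK)) := cond_linear HlLK.
  have HLA : LC (cond_lt (lex_lt rM rL)) := cond_LC HlM HlL HM HL.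
  have HLB : LC (cond_lt (lex_lt rL rK)) := cond_LC HlL HlK HL HK.
  have Hl1 := lex_linear HlA HlK. have Hl2 := lex_linear HlM HlB.
  have Hcs1 := csim_lex HlA HlK HLA HK.
  have Hcs2 := csim_lex HlM HlB HM HLB.
  have HcsML := csim_lex HlM HlL HM HL.
  have HcsLK := csim_lex HlL HlK HL HK.
  have HBcnt : cntT K -> cntT (cond_car (lex_lt rL rK)).
  { move=> HcK; apply: (quot_all_cnt HlLK) => x y; apply/HcsLK; by right. }
  rewrite /comega_lt.
  apply: (iso_crit _ _ (fun x : cond_car (lex_lt rM rL) * K =>
            ((rep x.1).1, cls (lex_lt rL rK) ((rep x.1).2, x.2))) Hl1 Hl2).
  + move=> [m D]. exists (cls (lex_lt rM rL) (m, (rep D).1), (rep D).2).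
    apply/Hcs2 => /=.
    have Hc : csim (lex_lt rM rL) (rep (cls (lex_lt rM rL) (m, (rep D).1))) (m, (rep D).1)
      := in_csim HlML (in_rep HlML _) (in_cls HlML _).
    case: (proj1 (HcsML _ _) Hc) => [E | HcL]; first by left.
    right; case: (classic (cntT K)) => HcK; first exact: HBcnt.
    exact: (proj2 (uncount_B HlL HlK HL HK HcK) HcL).
  + move=> [C k] [C' k'].
    case: (classic (cntT K)) => HcK.
    * have HB := HBcnt HcK.
      split => [[_ Hn]|[_ Hn]]; exfalso; apply: Hn; [apply/Hcs1|apply/Hcs2]; by right.
    * have HBL := uncount_B HlL HlK HL HK HcK.
      case: (classic (cntT L)) => HcL.
      - split => [[_ Hn]|[_ Hn]]; exfalso; apply: Hn.
        + apply/Hcs1; left => /=. apply: (quot_all_eq HlML) => x y; apply/HcsML; by right.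
        + apply/Hcs2; right; exact: (proj2 HBL HcL).
      - have HnB : ~ cntT (cond_car (lex_lt rL rK)) by move/HBL.
        have Hkey : rM (rep C).1 (rep C').1 <->
            lex_lt (cond_lt (lex_lt rM rL)) rK (C, k) (C', k') /\
            ~ csim (lex_lt (cond_lt (lex_lt rM rL)) rK) (C, k) (C', k').
        { split.
          - move=> H; split.
            + left => /=; apply/(cond_lt_char HlML (in_rep HlML C) (in_rep HlML C')); split.
              * by left.
              * move/HcsML => [E|/HcL []]. rewrite E in H; exact: (proj1 HlM) _ H.
            + move/Hcs1 => /= [E|/HcK []]. rewrite E in H; exact: (proj1 HlM) _ H.
          - move=> [[H|[E _]] Hn].
            + move/(cond_lt_char HlML (in_rep HlML C) (in_rep HlML C')): H => [[H|[E _]] Hn'] //.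
              exfalso; apply: Hn'; apply/HcsML; by left.
            + exfalso; apply: Hn; apply/Hcs1; by left. }
        apply: iff_trans (iff_sym Hkey) _ => /=.
        split.
        + move=> H; split; first by left.
          move/Hcs2 => /= [E|/HnB []]. rewrite E in H; exact: (proj1 HlM) _ H.
        + move=> [[H|[E _]] Hn] //. exfalso; apply: Hn; apply/Hcs2; by left.
Qed.
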